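(* Let $H\in\mathbb R^{n\times n}$, $f\in\mathbb R^n$, $A\in\mathbb R^{m\times n}$, $b\in\mathbb R^m$, with $\mathcal X=\{x\in\mathbb R^n: Ax\le b\}$ nonempty and $H+H^\top$ positive definite. Let $x^*$ be the unique solution of the affine variational inequality: find $x\in\mathcal X$ with $(Hx+f)^\top(y-x)\ge0$ for all $y\in\mathcal X$, and let $\mathcal A=\{i\in\{1,\dots,m\}: A_ix^*=b_i\}$. Assume (LICQ) the rows of $A_{\mathcal A}$ are linearly independent, so that there is a unique $\lambda^*\in\mathbb R^m$ with $Hx^*+f+A^\top\lambda^*=0$ and $0\le\lambda^*\perp b-Ax^*\ge0$; and assume (strict complementarity) $\lambda^*_i>0$ for all $i\in\mathcal A$. Then the DR-DAQP algorithm (described in the context) terminates after finitely many iterations, returning the exact solution $(x^*,\lambda^* )$ (with the returned multiplier understood as $\lambda^*_{\mathcal A}$, the remaining components being zero).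
   Context: Notation: $A_i$, $b_i$ denote the $i$-th row of $A$ and entry of $b$; for an index set $\mathcal S$, $A_{\mathcal S}$, $b_{\mathcal S}$, $\lambda_{\mathcal S}$ denote the corresponding submatrix/subvectors. Fix $\rho>0$, set $H_s=\tfrac12(H+H^\top)$, $\tilde H=\rho I+H_s$, and for $z\in\mathbb R^n$ let $\tilde f(z)=f+(H-\tilde H)z$. For a parameter $z$, let $\mathrm{QP}(z)$ denote the strictly convex quadratic program $\min_x \tfrac12 x^\top\tilde Hx+\tilde f(z)^\top x$ subject to $Ax\le b$; its active set at the minimizer $y$ is $\{i: A_iy=b_i\}$. DR-DAQP algorithm: start from an initial $z_0\in\mathbb R^n$, set $\delta=\infty$, and let $\mathcal A_{-1}$ be undefined (so the test below fails at $k=0$). For $k=0,1,2,\dots$: 1. Let $y_k$ be the solution of $\mathrm{QP}(z_k)$ and $\mathcal A_k$ its active set. 2. If $\mathcal A_k=\mathcal A_{k-1}$: let $(\tilde z_k,\lambda_k)$ solve the linear system $\begin{bmatrix}H & A_{\mathcal A_k}^\top\\ A_{\mathcal A_k} & 0\end{bmatrix}\begin{bmatrix}x\\ \lambda\end{bmatrix}=\begin{bmatrix}-f\\ b_{\mathcal A_k}\end{bmatrix}$. If $\lambda_k\ge0$ and $A\tilde z_k\le b$, stop and return $(\tilde z_k,\lambda_k)$. Otherwise, let $\tilde y_k$ be the solution of $\mathrm{QP}(\tilde z_k)$ and redefine $\mathcal A_k$ as its active set; if $\|\tilde y_k-\tilde z_k\|<\delta$, replace $y_k\leftarrow\tilde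 y_k$, $z_k\leftarrow\tilde z_k$, and set $\delta\leftarrow\|\tilde y_k-\tilde z_k\|$. 3. Set $z_{k+1}=(\rho I+H)^{-1}\big(\rho y_k+Hz_k+\tfrac{1}{2}H_s(y_k-z_k)\big)$. The algorithm iterates indefinitely unless it stops in step 2. *)

(* Defs.v *)
From HB Require Import structures.
From mathcomp Require Import all_boot all_order all_algebra.
From mathcomp Require Import reals.
Set Implicit Arguments. Unset Strict Implicit. Unset Printing Implicit Defensive.
Import Order.TTheory GRing.Theory Num.Theory.
Local Open Scope ring_scope.

Section DRDAQP.
Variables (R : realType) (n m : nat).
Variables (H : 'M[R]_n) (f : 'cV[R]_n) (A : 'M[R]_(m, n)) (b : 'cV[R]_m) (rho : R).

Definition Hs : 'M[R]_n := 2^-1 *: (H + H^T).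
Definition Htil : 'M[R]_n := rho%:M + Hs.
Definition ftil (z : 'cV[R]_n) : 'cV[R]_n := f + (H - Htil) *m z.

Definition feasible (x : 'cV[R]_n) : Prop := forall i, (A *m x) i 0 <= b i 0.

Definition qp_obj (ft x : 'cV[R]_n) : R :=
  2^-1 * (x^T *m Htil *m x) 0 0 + (ft^T *m x) 0 0.

Definition qp_sol (z y : 'cV[R]_n) : Prop :=
  feasible y /\ forall x, feasible x -> qp_obj (ftil z) y <= qp_obj (ftil z) x.

Definition active (y : 'cV[R]_n) : {set 'I_m} := [set i | (A *m y) i 0 == b i 0].

(* (x, lam_S) solves [H A_S^T; A_S 0][x; lam] = [-f; b_S];  the multiplier
   lam_S is stored as a vector of R^m that vanishes outside S. *)
Definition kkt_sys (S : {set 'I_m}) (x : 'cV[R]_n) (lam : 'cV[R]_m) : Prop :=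
  H *m x + A^T *m lam = - f /\
  (forall i, i \in S -> (A *m x) i 0 = b i 0) /\
  (forall i, i \notin S -> lam i 0 = 0).

Definition norm2 (v : 'cV[R]_n) : R := Num.sqrt (\sum_i (v i 0) ^+ 2).

(* delta : option R, None = +infinity *)
Definition lt_delta (d : option R) (v : R) : bool :=
  if d is Some d' then v < d' else true.

Definition znext (y z : 'cV[R]_n) : 'cV[R]_n :=
  invmx (rho%:M + H) *m (rho *: y + H *m z + 2^-1 *: (Hs *m (y - z))).

(* algorithm state at the start of iteration k: (z_k, delta, A_{k-1}) *)
Record state := State { st_z : 'cV[R]_n; st_delta : option R;
                        st_prev : option {set 'I_m} }.

Inductive outcome :=
| Stop of 'cV[R]_n & 'cV[R]_m
| Cont of state.

Definition init_state (z0 : 'cV[R]_n) : state := State z0 None None.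

Definition dr_step (s : state) (o : outcome) : Prop :=
  exists y, qp_sol (st_z s) y /\
  (if st_prev s == Some (active y) then
     exists zt lam, kkt_sys (active y) zt lam /\
       ( ((forall i, i \in active y -> 0 <= lam i 0) /\ feasible zt /\
          o = Stop zt lam)
       \/
         (~ ((forall i, i \in active y -> 0 <= lam i 0) /\ feasible zt) /\
          exists yt, qp_sol zt yt /\
            (if lt_delta (st_delta s) (norm2 (yt - zt))
             then o = Cont (State (znext yt zt) (Some (norm2 (yt - zt)))
                                  (Some (active yt)))
             else o = Cont (State (znext y (st_z s)) (st_delta s)
                                  (Some (active yt))))))
   else o = Cont (State (znext y (st_z s)) (st_delta s) (Some (active y)))).

Definition subrows (S : {set 'I_m}) : 'M[R]_(#|S|, n) :=
  \matrix_(i < #|S|) row (enum_val i) A.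

End DRDAQP.

(* Main.v *)
Require Import Defs.
From HB Require Import structures.
From mathcomp Require Import all_boot all_order all_algebra.
From mathcomp Require Import reals.
From mathcomp Require Import ring lra.
From Stdlib Require Classical.
From mathcomp Require boolp.
Import Order.TTheory GRing.Theory Num.Theory.
Local Open Scope ring_scope.
Set Implicit Arguments. Unset Strict Implicit. Unset Printing Implicit Defensive.

Lemma mxDE (T : realType) p r (M N : 'M[T]_(p, r)) i j : (M + N) i j = M i j + N i j.
Proof. by rewrite mxE. Qed.
Lemma mxBE (T : realType) p r (M N : 'M[T]_(p, r)) i j : (M - N) i j = M i j - N i j.
Proof. by rewrite !mxE. Qed.
Lemma mxZE (T : realType) p r a (M : 'M[T]_(p, r)) i j : (a *: M) i j = a * M i j.
Proof. by rewrite mxE. Qed.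
Lemma mxNE (T : realType) p r (M : 'M[T]_(p, r)) i j : (- M) i j = - M i j.
Proof. by rewrite mxE. Qed.

Section IP.
Variables (R : realType) (n : nat).
Implicit Types (v w : 'cV[R]_n) (Q : 'M[R]_n).

Definition ip v w : R := (v^T *m w) 0 0.

Lemma ipE v w : ip v w = \sum_i v i 0 * w i 0.
Proof. by rewrite /ip !mxE; apply: eq_bigr => i _; rewrite mxE. Qed.

Lemma ipC v w : ip v w = ip w v.
Proof. by rewrite !ipE; apply: eq_bigr => i _; rewrite mulrC. Qed.

Lemma ipDl v1 v2 w : ip (v1 + v2) w = ip v1 w + ip v2 w.
Proof. by rewrite !ipE -big_split; apply: eq_bigr => i _; rewrite mxE mulrDl. Qed.
Lemma ipDr v w1 w2 : ip v (w1 + w2) = ip v w1 + ip v w2.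
Proof. by rewrite ipC ipDl !(ipC v). Qed.
Lemma ipZl a v w : ip (a *: v) w = a * ip v w.
Proof. by rewrite !ipE mulr_sumr; apply: eq_bigr => i _; rewrite mxE mulrA. Qed.
Lemma ipZr a v w : ip v (a *: w) = a * ip v w.
Proof. by rewrite ipC ipZl ipC. Qed.
Lemma ipNl v w : ip (- v) w = - ip v w.
Proof. by rewrite -scaleN1r ipZl mulN1r. Qed.
Lemma ipNr v w : ip v (- w) = - ip v w.
Proof. by rewrite ipC ipNl ipC. Qed.
Lemma ipBl v1 v2 w : ip (v1 - v2) w = ip v1 w - ip v2 w.
Proof. by rewrite ipDl ipNl. Qed.
Lemma ipBr v w1 w2 : ip v (w1 - w2) = ip v w1 - ip v w2.
Proof. by rewrite ipDr ipNr. Qed.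
Lemma ip0l w : ip 0 w = 0.
Proof. by rewrite ipE big1 // => i _; rewrite mxE mul0r. Qed.
Lemma ip0r w : ip w 0 = 0.
Proof. by rewrite ipC ip0l. Qed.
Lemma ip_mull Q v w : ip (Q *m v) w = ip v (Q^T *m w).
Proof. by rewrite /ip trmx_mul mulmxA. Qed.
Lemma ip_mulr Q v w : ip v (Q *m w) = ip (Q^T *m v) w.
Proof. by rewrite ip_mull trmxK. Qed.
Lemma ip_ge0 v : 0 <= ip v v.
Proof. by rewrite ipE sumr_ge0 // => i _; rewrite -expr2 sqr_ge0. Qed.
Lemma ip_eq0 v : ip v v = 0 -> v = 0.
Proof.
rewrite ipE => /eqP; rewrite psumr_eq0; last by move=> i _; rewrite -expr2 sqr_ge0.
move=> /allP h; apply/matrixP => i j; rewrite (ord1 j) mxE.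
by have := h i (mem_index_enum _); rewrite -expr2 sqrf_eq0 => /eqP.
Qed.
Lemma ip_gt0 v : v != 0 -> 0 < ip v v.
Proof. by move=> hv; rewrite lt_def ip_ge0 andbT; apply: contra hv => /eqP/ip_eq0 ->. Qed.

Lemma ip_scalar a v w : ip v (a%:M *m w) = a * ip v w.
Proof. by rewrite mul_scalar_mx ipZr. Qed.

Lemma inj_unitmx Q : (forall v, Q *m v = 0 -> v = 0) -> Q \in unitmx.
Proof.
move=> h; rewrite -unitmx_tr -row_free_unit; apply: inj_row_free => v hv.
have: Q *m v^T = 0 by rewrite -(trmxK Q) -trmx_mul hv trmx0.
by move/h => /(congr1 trmx); rewrite trmxK trmx0.
Qed.

Lemma cs_pd Q c v : Q^T = Q -> (forall w, w != 0 -> 0 < ip w (Q *m w)) ->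
  (ip c v) ^+ 2 <= ip c (invmx Q *m c) * ip v (Q *m v).
Proof.
move=> hS hpd.
have hu : Q \in unitmx.
  apply: inj_unitmx => w hw; apply/eqP; apply/negPn/negP => /hpd.
  by rewrite hw ip0r ltxx.
have hge w : 0 <= ip w (Q *m w).
  by case: (eqVneq w 0) => [->|/hpd /ltW //]; rewrite ip0l.
set w := invmx Q *m c.
have hc : c = Q *m w by rewrite /w mulmxA mulmxV // mul1mx.
have -> : ip c (invmx Q *m c) = ip w (Q *m w) by rewrite {1}hc ip_mull hS ipC.
have -> : ip c v = ip w (Q *m v) by rewrite hc ip_mull hS.
have hsym x y : ip x (Q *m y) = ip y (Q *m x) by rewrite ip_mulr hS ipC.
case: (eqVneq v 0) => [->|hv]; first by rewrite mulmx0 ip0r ip0l expr0n /= mulr0.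
have hp := hpd v hv.
set a := ip w (Q *m w); set bb := ip w (Q *m v); set cc := ip v (Q *m v).
have := hge (w - (bb / cc) *: v).
rewrite mulmxBr ipBl !ipBr -!scalemxAr !ipZr !ipZl -/a -/bb -/cc.
rewrite (hsym v w) -/bb => h.
have hcc : cc != 0 by rewrite gt_eqF.
have e : a - bb / cc * bb - (bb / cc * bb - bb / cc * (bb / cc * cc)) = a - bb ^+ 2 / cc.
  by field.
rewrite e subr_ge0 ler_pdivrMr // in h.
Qed.

End IP.

Lemma ip_mulr_gen (R : realType) p r (B : 'M[R]_(p, r)) (v : 'cV[R]_p) (w : 'cV[R]_r) :
  ip v (B *m w) = ip (B^T *m v) w.
Proof. by rewrite /ip trmx_mul trmxK mulmxA. Qed.

Lemma sum_ge_term (T : realType) (I : finType) (P : pred I) (F : I -> T) j :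
  (forall i, P i -> 0 <= F i) -> P j -> F j <= \sum_(i | P i) F i.
Proof.
move=> h hj; rewrite (bigD1 j) //= lerDl sumr_ge0 // => i /andP[hi _]; exact: h.
Qed.

Lemma nat_eventually_const (g : nat -> nat) :
  (forall k, (g k.+1 <= g k)%N) -> exists K, forall k, (K <= k)%N -> g k = g K.
Proof.
move=> hg.
have mono : forall K k, (K <= k)%N -> (g k <= g K)%N.
  move=> K k /subnK <-; elim: (k - K)%N => [|j IH] //=.
  by rewrite addSn (leq_trans (hg _) IH).
suff : forall N K, (g K <= N)%N -> exists K', forall k, (K' <= k)%N -> g k = g K'.
  by move=> /(_ (g 0%N) 0%N (leqnn _)).
elim=> [|N IH] K hK.
  exists K => k hk; have := mono _ _ hk; move: hK; rewrite leqn0 => /eqP ->.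
  by rewrite leqn0 => /eqP ->.
case: (Classical_Prop.classic (forall k, (K <= k)%N -> g k = g K)) => [h|].
  by exists K.
move=> hn; have [k hk'] := Classical_Pred_Type.not_all_ex_not _ _ hn.
have [hk hne] := Classical_Prop.imply_to_and _ _ hk'.
apply: (IH k); have := mono _ _ hk; rewrite leq_eqVlt => /orP[/eqP h|h] //.
by rewrite -ltnS (leq_trans h hK).
Qed.

Section Main.
Variables (R : realType) (n m : nat) (H : 'M[R]_n) (f : 'cV[R]_n)
  (A : 'M[R]_(m, n)) (b : 'cV[R]_m) (rho : R).
Hypothesis hrho : 0 < rho.
Hypothesis hpd : forall v : 'cV[R]_n, v != 0 -> 0 < (v^T *m (H + H^T) *m v) 0 0.

Definition q (v : 'cV[R]_n) := ip v (Hs H *m v).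
Definition Ht := Htil H rho.
Definition Pm : 'M[R]_n := rho%:M + H.
Definition Mm : 'M[R]_n := rho%:M + 2^-1 *: Hs H.
Definition Wm : 'M[R]_n := rho%:M + Hs H - H.

Lemma HsT : (Hs H)^T = Hs H.
Proof. by rewrite /Hs linearZ /= linearD /= trmxK addrC. Qed.

Lemma q_HHt v : q v = 2^-1 * ip v ((H + H^T) *m v).
Proof. by rewrite /q /Hs -scalemxAl ipZr. Qed.

Lemma ipH v : ip v (H *m v) = q v.
Proof.
rewrite q_HHt mulmxDl ipDr [ip v (H^T *m v)]ip_mulr trmxK ipC.
lra.
Qed.

Lemma q_gt0 v : v != 0 -> 0 < q v.
Proof. by move=> /hpd; rewrite q_HHt /ip -mulmxA => h; rewrite mulr_gt0 ?invr_gt0. Qed.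

Lemma q_ge0 v : 0 <= q v.
Proof. by case: (eqVneq v 0) => [->|/q_gt0/ltW //]; rewrite /q ip0l. Qed.

Lemma q_pd v : v != 0 -> 0 < ip v (Hs H *m v).
Proof. exact: q_gt0. Qed.

Lemma HtT : Ht^T = Ht.
Proof. by rewrite /Ht /Htil linearD /= tr_scalar_mx HsT. Qed.

Lemma ipHt v : ip v (Ht *m v) = rho * ip v v + q v.
Proof. by rewrite /Ht /Htil mulmxDl ipDr ip_scalar. Qed.

Lemma MmT : Mm^T = Mm.
Proof. by rewrite /Mm linearD /= tr_scalar_mx linearZ /= HsT. Qed.

Lemma ipMm v : ip v (Mm *m v) = rho * ip v v + 2^-1 * q v.
Proof. by rewrite /Mm mulmxDl ipDr ip_scalar -scalemxAl ipZr. Qed.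

Lemma ipPm v : ip v (Pm *m v) = rho * ip v v + q v.
Proof. by rewrite /Pm mulmxDl ipDr ip_scalar ipH. Qed.

Lemma pos_form (Q : 'M[R]_n) : (forall v, ip v (Q *m v) = rho * ip v v + q v) ->
  forall v, v != 0 -> 0 < ip v (Q *m v).
Proof. by move=> h v hv; rewrite h ltr_wpDr ?q_ge0 // mulr_gt0 // ip_gt0. Qed.

Lemma pos_unit (Q : 'M[R]_n) : (forall v, v != 0 -> 0 < ip v (Q *m v)) -> Q \in unitmx.
Proof.
move=> h; apply: inj_unitmx => w hw; apply/eqP; apply/negPn/negP => /h.
by rewrite hw ip0r ltxx.
Qed.

Lemma Pm_unit : Pm \in unitmx.
Proof. by apply/pos_unit/pos_form/ipPm. Qed.
Lemma Mm_unit : Mm \in unitmx.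
Proof.
apply/pos_unit => v hv; rewrite ipMm ltr_wpDr ?mulr_ge0 ?invr_ge0 ?q_ge0 //.
by rewrite mulr_gt0 // ip_gt0.
Qed.
Lemma Hs_unit : Hs H \in unitmx.
Proof. by apply/pos_unit/q_gt0. Qed.
Lemma Ht_pos v : v != 0 -> 0 < ip v (Ht *m v).
Proof. by apply/pos_form/ipHt. Qed.
Lemma Ht_ge0 v : 0 <= ip v (Ht *m v).
Proof. by case: (eqVneq v 0) => [->|/Ht_pos/ltW //]; rewrite ip0l. Qed.

Lemma qp_objE ft x : qp_obj H rho ft x = 2^-1 * ip x (Ht *m x) + ip ft x.
Proof. by rewrite /qp_obj /ip mulmxA. Qed.

Lemma obj_expand ft y d t :
  qp_obj H rho ft (y + t *: d) =
  qp_obj H rho ft y + t * ip (Ht *m y + ft) d + t ^+ 2 / 2 * ip d (Ht *m d).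
Proof.
rewrite !qp_objE mulmxDr !ipDl !ipDr -!scalemxAr !ipZl !ipZr.
rewrite [ip y (Ht *m d)]ip_mulr HtT [ip (Ht *m y) d]ipC.
by field.
Qed.


Local Notation feas := (feasible A b).

Lemma descent ft y d T0 : 0 < T0 ->
  (forall t, 0 < t <= T0 -> feas (y + t *: d)) ->
  ip (Ht *m y + ft) d < 0 ->
  exists x, feas x /\ qp_obj H rho ft x < qp_obj H rho ft y.
Proof.
move=> hT hf hg.
set g := ip (Ht *m y + ft) d in hg *; set C := ip d (Ht *m d).
have hC : 0 <= C := Ht_ge0 d.
set gam := - g.
have hgam : 0 < gam by rewrite /gam oppr_gt0.
set D := T0 * C + gam.
have hD : 0 < D by rewrite /D ltr_wpDl // mulr_ge0 // ltW.
set t := T0 * gam / D.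
have ht0 : 0 < t by rewrite /t divr_gt0 // mulr_gt0.
have htD : t * D = T0 * gam by rewrite /t mulrVK // unitfE gt_eqF.
have htT : t <= T0.
  have : t * D <= T0 * D by rewrite htD ler_pM2l // /D lerDr mulr_ge0 // ltW.
  by rewrite (ler_pM2r hD).
exists (y + t *: d); split; first by apply: hf; rewrite ht0 htT.
rewrite obj_expand -/g -/C.
have htC : t * C <= gam.
  have : T0 * (t * C) <= T0 * gam.
    have e : T0 * (t * C) = T0 * gam - t * gam.
      by rewrite -htD /D; ring.
    by rewrite e gerBl mulr_ge0 // ltW.
  by rewrite (ler_pM2l hT).
have h2 : t * (t * C) <= t * gam by rewrite (ler_pM2l ht0).
have h3 : 0 < t * gam by rewrite mulr_gt0.
have -> : t ^+ 2 / 2 * C = (t * (t * C)) / 2 by rewrite expr2; field.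
have -> : t * g = - (t * gam) by rewrite /gam mulrN opprK.
lra.
Qed.

Lemma feas_seg x y t : feas x -> feas y -> 0 <= t <= 1 -> feas (y + t *: (x - y)).
Proof.
move=> hx hy /andP[t0 t1] i.
rewrite mulmxDr -scalemxAr mulmxBr mxDE mxZE mxBE.
have := hx i; have := hy i; set ax := (A *m x) i 0; set ay := (A *m y) i 0.
move=> h1 h2.
have e : ay + t * (ax - ay) = (1 - t) * ay + t * ax by ring.
rewrite e. have : (1 - t) * ay <= (1 - t) * b i 0 by rewrite ler_wpM2l // subr_ge0.
have : t * ax <= t * b i 0 by rewrite ler_wpM2l.
lra.
Qed.

Lemma qp_vi z y : qp_sol H f A b rho z y ->
  forall x, feas x -> 0 <= ip (Ht *m y + ftil H f rho z) (x - y).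
Proof.
move=> [hy hmin] x hx; rewrite leNgt; apply/negP => hlt.
have hseg : forall t, 0 < t <= 1 -> feas (y + t *: (x - y)).
  by move=> t /andP[/ltW t0 t1]; apply: feas_seg => //; rewrite t0 t1.
have [x' [hx' hlt']] := descent ltr01 hseg hlt.
by have := hmin x' hx'; rewrite leNgt hlt'.
Qed.

Lemma ipHtC u v : ip u (Ht *m v) = ip v (Ht *m u).
Proof. by rewrite ip_mulr HtT ipC. Qed.

Lemma qp_unique z y1 y2 : qp_sol H f A b rho z y1 -> qp_sol H f A b rho z y2 -> y1 = y2.
Proof.
move=> h1 h2; have v1 := qp_vi h1 (proj1 h2); have v2 := qp_vi h2 (proj1 h1).
move: v1 v2; set ft := ftil H f rho z => v1 v2.
apply/eqP; rewrite -subr_eq0; apply/negP => /negP hne.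
have := Ht_pos hne.
rewrite mulmxBr !(ipDl, ipBl, ipBr, ipNl, ipNr) in v1 v2 *.
rewrite !(ipC (Ht *m _)) in v1 v2.
rewrite (ipHtC y2 y1) in v1 v2 *.
lra.
Qed.

Definition Nm := invmx Mm.
Definition V (e : 'cV[R]_n) := ip (Wm *m e) (Nm *m (Wm *m e)).

Lemma Wm_eq : Wm = 2 *: Mm - Pm.
Proof.
rewrite /Wm /Mm /Pm; apply/matrixP => i j; rewrite !mxE.
by case: (i == j) => /=; rewrite ?mulr1n ?mulr0n; lra.
Qed.

Lemma WmM_eq : Wm - Mm = - (H - 2^-1 *: Hs H).
Proof.
rewrite /Wm /Mm; apply/matrixP => i j; rewrite !mxE.
by case: (i == j) => /=; rewrite ?mulr1n ?mulr0n; lra.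
Qed.

Lemma PmH_eq : 2 *: (H - 2^-1 *: Hs H) - Pm = - Wm.
Proof.
rewrite /Wm /Pm; apply/matrixP => i j; rewrite !mxE.
by case: (i == j) => /=; rewrite ?mulr1n ?mulr0n; lra.
Qed.

Lemma ipMmC u v : ip u (Mm *m v) = ip v (Mm *m u).
Proof. by rewrite ip_mulr MmT ipC. Qed.

Lemma Mm_ge0 v : 0 <= ip v (Mm *m v).
Proof. by rewrite ipMm addr_ge0 ?mulr_ge0 ?invr_ge0 ?q_ge0 ?ip_ge0 // ltW. Qed.

Lemma V_ge0 e : 0 <= V e.
Proof.
rewrite /V; set s := Wm *m e.
have -> : s = Mm *m (Nm *m s) by rewrite mulmxA mulmxV ?Mm_unit ?mul1mx.
rewrite [Nm *m (Mm *m _)]mulmxA mulVmx ?Mm_unit // mul1mx ipC; exact: Mm_ge0.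
Qed.

Lemma V_shift (s w : 'cV[R]_n) :
  ip (s + Mm *m w) (Nm *m (s + Mm *m w)) = ip s (Nm *m s) + 2 * ip s w + ip w (Mm *m w).
Proof.
have h1 : Nm *m (Mm *m w) = w by rewrite /Nm mulmxA mulVmx ?Mm_unit // mul1mx.
rewrite mulmxDr !ipDl !ipDr h1 [ip (Mm *m w) (Nm *m s)]ip_mull MmT /Nm mulmxA mulmxV ?Mm_unit //.
rewrite mul1mx [ip (Mm *m w) w]ipC (ipC w s); lra.
Qed.

Lemma lyap_step e u e' :
  ip u (Ht *m u) <= ip u (Wm *m e) ->
  Pm *m e' = Mm *m u + (H - 2^-1 *: Hs H) *m e ->
  V e' + q u + q (2 *: e' - e) <= V e.
Proof.
move=> hi hii.
set s := Wm *m e in hi *; set a := 2 *: e' - e; set dd := a - u.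
have hs' : Wm *m e' = s + Mm *m dd.
  rewrite /dd /a Wm_eq mulmxBl hii -scalemxAl !mulmxBr -scalemxAr.
  have : (Wm - Mm) *m e = - ((H - 2^-1 *: Hs H) *m e) by rewrite WmM_eq mulNmx.
  rewrite mulmxBl -/s => h.
  apply/matrixP => i j; move/matrixP: h => /(_ i j).
  rewrite !(mxDE, mxBE, mxNE, mxZE) => h; lra.
have hii' : Pm *m a = 2 *: (Mm *m u) - s.
  rewrite /a mulmxBr -scalemxAr hii scalerDr.
  have : (2 *: (H - 2^-1 *: Hs H) - Pm) *m e = - s by rewrite PmH_eq mulNmx.
  rewrite mulmxBl -scalemxAl => h.
  apply/matrixP => i j; move/matrixP: h => /(_ i j).
  rewrite !(mxDE, mxBE, mxNE, mxZE) => h; lra.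
have hVe' : V e' = V e + 2 * ip s dd + ip dd (Mm *m dd).
  by rewrite /V hs' V_shift.

have dd_def : dd = a - u by [].
clearbody dd a s.
have hipa : ip a (Pm *m a) = 2 * ip a (Mm *m u) - ip a s.
  by rewrite hii' ipBr ipZr.
rewrite ipPm in hipa. rewrite ipHt in hi.
have hMa := ipMm a. have hMu := ipMm u.
have hdd : ip dd (Mm *m dd) = ip a (Mm *m a) - 2 * ip a (Mm *m u) + ip u (Mm *m u).
  rewrite dd_def mulmxBr !(ipBl, ipBr) (ipMmC u a); lra.
have hsdd : ip s dd = ip s a - ip s u by rewrite dd_def ipBr.
have := Mm_ge0 dd.
rewrite hVe' hdd hsdd (ipC s a) (ipC s u).
lra.
Qed.

Variables (xs : 'cV[R]_n).
Hypothesis hxs : feasible A b xs.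
Hypothesis hvi : forall y, feasible A b y -> 0 <= ((H *m xs + f)^T *m (y - xs)) 0 0.

Lemma HtW_eq : Ht - Wm = H.
Proof.
rewrite /Ht /Htil /Wm; apply/matrixP => i j; rewrite !mxE.
by case: (i == j) => /=; rewrite ?mulr1n ?mulr0n; lra.
Qed.

Lemma Mm_split (v : 'cV[R]_n) : Mm *m v = rho *: v + 2^-1 *: (Hs H *m v).
Proof. by rewrite /Mm mulmxDl mul_scalar_mx -scalemxAl. Qed.

Lemma Pm_split (v : 'cV[R]_n) : Pm *m v = rho *: v + H *m v.
Proof. by rewrite /Pm mulmxDl mul_scalar_mx. Qed.

Lemma step_conds z y :
  qp_sol H f A b rho z y ->
  ip (y - xs) (Ht *m (y - xs)) <= ip (y - xs) (Wm *m (z - xs)) /\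
  Pm *m (znext H rho y z - xs) =
    Mm *m (y - xs) + (H - 2^-1 *: Hs H) *m (z - xs).
Proof.
move=> hq; split.
  have h1 := qp_vi hq hxs.
  have h2 := hvi (proj1 hq); rewrite -/(ip _ _) in h2.
  have hg : Ht *m y + ftil H f rho z - (H *m xs + f) =
            Ht *m (y - xs) - Wm *m (z - xs).
    rewrite /ftil -/Ht -HtW_eq !mulmxBr !mulmxBl.
    apply/matrixP => i j; rewrite !(mxDE, mxBE, mxNE, mxZE); lra.
  have : ip (Ht *m (y - xs) - Wm *m (z - xs)) (y - xs) <= 0.
    rewrite -hg ipBl; rewrite -opprB ipNr in h1; lra.
  by rewrite ipC ipBr; lra.
rewrite /znext mulmxBr {1}/Pm mulKVmx; last by have := Pm_unit; rewrite /Pm.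
rewrite Mm_split Pm_split !mulmxBr !mulmxBl ?mulmxDr -?scalemxAl ?mulmxBr.
apply/matrixP => i j; rewrite !(mxDE, mxBE, mxNE, mxZE); lra.
Qed.

Variables (ls : 'cV[R]_m).
Hypothesis hlicq : row_free (subrows A (active A b xs)).
Hypothesis hkkt : H *m xs + f + A^T *m ls = 0.
Hypothesis hls : forall i, 0 <= ls i 0.
Hypothesis hcomp : (ls^T *m (b - A *m xs)) 0 0 = 0.
Hypothesis hsc : forall i, i \in active A b xs -> 0 < ls i 0.

Local Notation Ss := (active A b xs).

Lemma ls_off j : j \notin Ss -> ls j 0 = 0.
Proof.
move=> hj; have := hcomp; rewrite -/(ip ls (b - A *m xs)) ipE => /eqP.
rewrite psumr_eq0 => [/allP /(_ j (mem_index_enum _))|i _].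
  rewrite mulf_eq0 => /orP[/eqP //|]; rewrite mxBE subr_eq0 => /eqP h.
  by move: hj; rewrite inE h eqxx.
by rewrite mulr_ge0 // mxBE subr_ge0 hxs.
Qed.

Lemma licq_inj (w : 'cV[R]_m) : (forall j, j \notin Ss -> w j 0 = 0) ->
  A^T *m w = 0 -> w = 0.
Proof.
move=> hw hA.
pose wr : 'rV[R]_#|Ss| := \row_r w (enum_val r) 0.
have : wr *m subrows A Ss = 0 *m subrows A Ss.
  rewrite mul0mx; apply/rowP => k; rewrite !mxE.
  move/matrixP: hA => /(_ k 0); rewrite !mxE => h; apply: eq_trans h.
  transitivity (\sum_(j in Ss) A^T k j * w j 0).
    by rewrite [RHS]big_enum_val; apply: eq_bigr => r _; rewrite !mxE mulrC.
  rewrite [RHS](bigID (fun j => j \in Ss)) /= [X in _ = _ + X]big1 ?addr0 //.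
  by move=> j hj; rewrite hw // mulr0.
move/(row_free_inj hlicq) => hwr.
apply/matrixP => j c; rewrite (ord1 c) mxE.
case: (boolP (j \in Ss)) => hj; last exact: hw.
move/matrixP: hwr => /(_ 0 (enum_rank_in hj j)).
by rewrite !mxE enum_rankK_in.
Qed.

Lemma kkt_hom S x1 l1 x2 l2 :
  kkt_sys H f A b S x1 l1 -> kkt_sys H f A b S x2 l2 ->
  x1 = x2 /\ A^T *m (l1 - l2) = 0.
Proof.
move=> [e1 [a1 z1]] [e2 [a2 z2]].
have hd : H *m (x1 - x2) + A^T *m (l1 - l2) = 0.
  rewrite mulmxBr mulmxBr; apply/matrixP => i j.
  move/matrixP: e1 => /(_ i j); move/matrixP: e2 => /(_ i j).
  rewrite !(mxDE, mxBE, mxNE, mxZE) => h2 h1; rewrite [RHS]mxE; lra.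
have hz : ip (x1 - x2) (A^T *m (l1 - l2)) = 0.
  rewrite ip_mulr_gen trmxK ipE big1 // => j _.
  case: (boolP (j \in S)) => hj.
    by rewrite mulmxBr mxBE a1 // a2 // subrr mul0r.
  by rewrite mxBE z1 // z2 // subrr mulr0.
have hq : q (x1 - x2) = 0.
  rewrite -ipH; move: hz; have -> : A^T *m (l1 - l2) = - (H *m (x1 - x2)).
    by apply/eqP; rewrite -addr_eq0 addrC hd.
  by rewrite ipNr => /eqP; rewrite oppr_eq0 => /eqP.
have hx : x1 - x2 = 0.
  by apply/eqP; apply/negP => /negP /q_gt0; rewrite hq ltxx.
split; first by apply/eqP; rewrite -subr_eq0 hx.
by move: hd; rewrite hx mulmx0 add0r.
Qed.

Lemma kkt_star x l : kkt_sys H f A b Ss x l -> x = xs /\ l = ls.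
Proof.
move=> hk.
have hks : kkt_sys H f A b Ss xs ls.
  split; first by apply/eqP; rewrite -addr_eq0 addrAC hkkt.
  split; first by move=> i; rewrite inE => /eqP.
  exact: ls_off.
have [-> h] := kkt_hom hk hks; split => //.
apply/eqP; rewrite -subr_eq0; apply/eqP; apply: licq_inj h => j hj.
by rewrite mxBE (proj2 (proj2 hk)) // ls_off // subrr.
Qed.

Lemma kkt_stop S x l : kkt_sys H f A b S x l -> (forall i, i \in S -> 0 <= l i 0) ->
  feasible A b x -> x = xs /\ l = ls.
Proof.
move=> [e1 [a1 z1]] hl hx.
have hvix : forall y, feasible A b y -> 0 <= ip (H *m x + f) (y - x).
  move=> y hy.
  have -> : H *m x + f = - (A^T *m l).
    by apply/eqP; rewrite -addr_eq0 addrAC e1 addNr.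
  rewrite ipNl ipC ip_mulr_gen trmxK ipE -sumrN sumr_ge0 // => j _.
  case: (boolP (j \in S)) => hj.
    rewrite mulmxBr mxBE a1 // -mulNr opprB mulr_ge0 ?hl // subr_ge0; exact: hy.
  by rewrite z1 // mulr0 oppr0.
have h1 := hvix _ hxs.
have h2 := hvi hx; rewrite -/(ip _ _) in h2.
have hq : q (x - xs) <= 0.
  rewrite -ipH; move: h1 h2.
  rewrite mulmxBr !ipDl !(ipBr, ipBl) !ipNl !(ipC (H *m _)); lra.
have ex : x = xs.
  apply/eqP; rewrite -subr_eq0; apply/eqP/eqP; apply/negP => /negP /q_gt0.
  by rewrite ltNge hq.
subst x; apply: (kkt_star (x := xs)).
split; first by [].
split; first by move=> i; rewrite inE => /eqP.
move=> j hj; apply: z1; apply: contra hj => hjS.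
by rewrite inE a1.
Qed.

Lemma feas_dir y d : feasible A b y ->
  (forall j, 0 < (A *m d) j 0 -> (A *m y) j 0 < b j 0) ->
  exists T0, 0 < T0 /\ forall t, 0 < t <= T0 -> feasible A b (y + t *: d).
Proof.
move=> hy hd.
set Sg := \sum_(j | 0 < (A *m d) j 0) (A *m d) j 0 / (b j 0 - (A *m y) j 0).
have hSg : 0 <= Sg.
  by apply: sumr_ge0 => j hj; rewrite divr_ge0 ?ltW // subr_gt0 hd.
have h1S : 0 < 1 + Sg by rewrite ltr_wpDr.
exists (1 + Sg)^-1; split; first by rewrite invr_gt0.
move=> t /andP[ht0 htT] j.
rewrite mulmxDr -scalemxAr mxDE mxZE.
have hyj := hy j.
case: (lerP ((A *m d) j 0) 0) => hdj.
  have : t * (A *m d) j 0 <= 0 by rewrite mulr_ge0_le0 // ltW.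
  lra.
have hs := hd j hdj.
set c := (A *m d) j 0 in hdj hs *; set s := b j 0 - (A *m y) j 0.
have hs0 : 0 < s by rewrite /s subr_gt0.
have hterm : c / s <= Sg.
  rewrite /Sg; apply: (sum_ge_term (P := fun j => 0 < (A *m d) j 0)
    (F := fun j => (A *m d) j 0 / (b j 0 - (A *m y) j 0))) => //.
  by move=> i hi; rewrite divr_ge0 ?ltW // subr_gt0 hd.
have htS : t * (1 + Sg) <= 1.
  have : t * (1 + Sg) <= (1 + Sg)^-1 * (1 + Sg) by rewrite ler_wpM2r // ltW.
  by rewrite mulVf // gt_eqF.
have : t * (c / s) <= 1.
  have : t * (c / s) <= t * Sg by rewrite ler_wpM2l // ltW.
  have : 0 <= t by rewrite ltW. nra.
have -> : t * c = (t * (c / s)) * s by rewrite mulrA mulfVK // gt_eqF.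
move=> h; have : t * (c / s) * s <= 1 * s by rewrite ler_wpM2r // ltW.
rewrite mul1r /s; lra.
Qed.

Lemma K_ge0 c : 0 <= ip c (invmx (Hs H) *m c).
Proof.
set w := invmx (Hs H) *m c.
have hc : c = Hs H *m w by rewrite /w mulmxA mulmxV ?Hs_unit // mul1mx.
by rewrite {1}hc ipC; exact: q_ge0.
Qed.

Lemma cs_q c v : (ip c v) ^+ 2 <= ip c (invmx (Hs H) *m c) * q v.
Proof. by rewrite /q; apply: cs_pd; [exact: HsT | exact: q_pd]. Qed.

Lemma rowA_ip j v : (A *m v) j 0 = ip (row j A)^T v.
Proof. by rewrite ipE mxE; apply: eq_bigr => k _; rewrite !mxE. Qed.

Lemma g_diff z y : Ht *m y + ftil H f rho z - (H *m xs + f) =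
            Ht *m (y - xs) - Wm *m (z - xs).
Proof.
rewrite /ftil -/Ht -HtW_eq !mulmxBr !mulmxBl.
apply/matrixP => i j; rewrite !(mxDE, mxBE, mxNE, mxZE); lra.
Qed.

Lemma g_diff2 (e u e' : 'cV[R]_n) : Pm *m e' = Mm *m u + (H - 2^-1 *: Hs H) *m e ->
  Ht *m u - Wm *m e = Pm *m (2 *: e' - e) - rho *: u.
Proof.
move=> hii.
have h1 : Ht = Mm + 2^-1 *: Hs H.
  rewrite /Ht /Htil /Mm; apply/matrixP => i j; rewrite !mxE.
  by case: (i == j) => /=; rewrite ?mulr1n ?mulr0n; lra.
have h2 : Wm *m e = Pm *m e - 2 *: ((H - 2^-1 *: Hs H) *m e).
  by rewrite -[Wm]opprK -PmH_eq opprB mulmxBl -scalemxAl.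
rewrite h2 mulmxBr -scalemxAr hii h1 [(Mm + _) *m u]mulmxDl Mm_split -[(2^-1 *: Hs H) *m u]scalemxAl.
apply/matrixP => i j; rewrite !(mxDE, mxBE, mxNE, mxZE); lra.
Qed.

Lemma sq_lt_bound (x e : R) : 0 < e -> x ^+ 2 < e ^+ 2 -> - e < x /\ x < e.
Proof. move=> he h; split; nra. Qed.

Lemma sum_term_all (I : finType) (F : I -> R) j :
  (forall i, 0 <= F i) -> F j <= \sum_i F i.
Proof. by move=> h; apply: (sum_ge_term (P := xpredT)). Qed.

Lemma active_ident : exists eps, 0 < eps /\
  forall z y, qp_sol H f A b rho z y ->
  q (y - xs) < eps -> q (2 *: (znext H rho y z - xs) - (z - xs)) < eps ->
  active A b y = Ss.
Proof.
have [X hX] := row_freeP hlicq.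
pose Kc (c : 'cV[R]_n) := ip c (invmx (Hs H) *m c).
pose S1 := \sum_j Kc (row j A)^T.
pose S2 := \sum_r (Kc (Pm^T *m col r X) + Kc (rho *: col r X)).
pose Kt := 1 + S1 + S2.
have hKc c : 0 <= Kc c by exact: K_ge0.
have hS1 : 0 <= S1 by apply: sumr_ge0.
have hS2 : 0 <= S2 by apply: sumr_ge0 => r _; rewrite addr_ge0.
have hKt0 : 0 < Kt by rewrite /Kt; lra.
have hKtA j : Kc (row j A)^T <= Kt.
  have := sum_term_all (F := fun j => Kc (row j A)^T) j (fun i => hKc _); rewrite -/S1 /Kt; lra.
have hKtP r : Kc (Pm^T *m col r X) <= Kt.
  have := sum_term_all (F := fun r => Kc (Pm^T *m col r X) + Kc (rho *: col r X)) r
     (fun r => addr_ge0 (hKc _) (hKc _)).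
  rewrite -/S2 /Kt; have := hKc (rho *: col r X); lra.
have hKtR r : Kc (rho *: col r X) <= Kt.
  have := sum_term_all (F := fun r => Kc (Pm^T *m col r X) + Kc (rho *: col r X)) r
     (fun r => addr_ge0 (hKc _) (hKc _)).
  rewrite -/S2 /Kt; have := hKc (Pm^T *m col r X); lra.
pose T1 := \sum_(j | j \notin Ss) (b j 0 - (A *m xs) j 0)^-1.
pose T2 := \sum_(i | i \in Ss) (ls i 0)^-1.
have hslk j : j \notin Ss -> 0 < b j 0 - (A *m xs) j 0.
  move=> hj; rewrite subr_gt0 lt_def hxs andbT; apply: contra hj => /eqP h.
  by rewrite inE h.
have hT1 : 0 <= T1 by apply: sumr_ge0 => j hj; rewrite invr_ge0 ltW // hslk.
have hT2 : 0 <= T2 by apply: sumr_ge0 => j hj; rewrite invr_ge0 ltW // hsc.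
pose eta := (1 + T1 + T2)^-1.
have heta : 0 < eta by rewrite invr_gt0; lra.
have hetaD : eta * (1 + T1 + T2) = 1 by rewrite mulVf // gt_eqF //; lra.
have hetaS j : j \notin Ss -> eta <= b j 0 - (A *m xs) j 0.
  move=> hj; have hs := hslk j hj.
  have : (b j 0 - (A *m xs) j 0)^-1 <= T1.
    by apply: (sum_ge_term (P := fun j => j \notin Ss)) => // i hi; rewrite invr_ge0 ltW // hslk.
  move=> h; have : eta * (b j 0 - (A *m xs) j 0)^-1 <= eta * (1 + T1 + T2).
    by rewrite ler_wpM2l ?ltW //; lra.
  rewrite hetaD => h2.
  by have := ler_wpM2r (ltW hs) h2; rewrite mul1r -mulrA mulVf ?gt_eqF // mulr1.
have hetaL i : i \in Ss -> eta <= ls i 0.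
  move=> hi; have hli := hsc hi.
  have : (ls i 0)^-1 <= T2.
    by apply: (sum_ge_term (P := fun j => j \in Ss)) => // j hj; rewrite invr_ge0 ltW // hsc.
  move=> h; have : eta * (ls i 0)^-1 <= eta * (1 + T1 + T2).
    by rewrite ler_wpM2l ?ltW //; lra.
  rewrite hetaD => h2.
  by have := ler_wpM2r (ltW hli) h2; rewrite mul1r -mulrA mulVf ?gt_eqF // mulr1.
pose eps := (eta / 2) ^+ 2 / Kt.
have heps : 0 < eps by rewrite divr_gt0 // exprn_gt0 // divr_gt0.
have hbound c v : Kc c <= Kt -> q v < eps -> - (eta / 2) < ip c v /\ ip c v < eta / 2.
  move=> hc hv; apply: sq_lt_bound; first by rewrite divr_gt0.
  apply: (le_lt_trans (cs_q c v)).
  have : Kc c * q v <= Kt * q v by rewrite ler_wpM2r // q_ge0.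
  have : Kt * q v < Kt * eps by rewrite ltr_pM2l.
  have -> : Kt * eps = (eta / 2) ^+ 2 by rewrite /eps mulrC mulfVK // gt_eqF.
  rewrite /Kc; lra.
exists eps; split => // z y hq hu ha.
have [hi hii] := step_conds hq.
move: hu ha hii; set z' := znext H rho y z; set u := y - xs; set e := z - xs.
set a := 2 *: (z' - xs) - e => hu ha hii.
have hg : Ht *m y + ftil H f rho z = - (A^T *m ls) + (Pm *m a - rho *: u).
  rewrite -(g_diff2 hii) -g_diff.
  have -> : - (A^T *m ls) = H *m xs + f.
    by apply/eqP; rewrite eq_sym -addr_eq0 hkkt.
  by rewrite [RHS]addrCA subrr addr0.
have hyx : forall j, (A *m y) j 0 = (A *m xs) j 0 + (A *m u) j 0.
  by move=> j; rewrite /u mulmxBr mxBE addrC subrK.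
have hA j : j \notin Ss -> (A *m y) j 0 < b j 0.
  move=> hj; rewrite hyx (rowA_ip j u).
  have [_ h1] := hbound _ _ (hKtA j) hu.
  have := hetaS j hj; lra.
have hAi i : i \in Ss -> (A *m y) i 0 = b i 0.
  move=> hiS; apply/eqP; rewrite eq_le (proj1 hq i) /= leNgt; apply/negP => hlt.
  pose r := enum_rank_in hiS i; pose d := col r X.
  have hAd j : j \in Ss -> (A *m d) j 0 = (j == i)%:R.
    move=> hj.
    have <- : (subrows A Ss *m X) (enum_rank_in hj j) r = (A *m d) j 0.
      by rewrite !mxE; apply: eq_bigr => k _; rewrite !mxE enum_rankK_in.
    rewrite hX mxE; congr (_%:R); congr (nat_of_bool _).
    apply/idP/idP => /eqP h; apply/eqP.
      by have := congr1 enum_val h; rewrite /r !enum_rankK_in.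
    by apply: enum_val_inj; rewrite /r !enum_rankK_in.
  have hdir j : 0 < (A *m d) j 0 -> (A *m y) j 0 < b j 0.
    case: (boolP (j \in Ss)) => hj; last by move=> _; exact: hA.
    by rewrite hAd //; case: eqP => [-> _ | _]; [exact: hlt | rewrite ltxx].
  have [T0 [hT0 hT]] := feas_dir (proj1 hq) hdir.
  have hgd : ip (Ht *m y + ftil H f rho z) d < 0.
    rewrite hg ipDl ipNl ipBl.
    have -> : ip (A^T *m ls) d = ls i 0.
      rewrite ipC ip_mulr_gen trmxK ipE (bigD1 i) //= big1 ?addr0.
        by rewrite hAd // eqxx mul1r.
      move=> j hji; case: (boolP (j \in Ss)) => hj.
        by rewrite hAd // (negbTE hji) mul0r.
      by rewrite ls_off // mulr0.
    rewrite ip_mull ipC (ipC (rho *: u)) ipZr -ipZl.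
    have [_ h1] := hbound _ _ (hKtP r) ha.
    have [h2 _] := hbound _ _ (hKtR r) hu.
    have := hetaL i hiS; lra.
  have [x [hx hlt']] := descent hT0 hT hgd.
  by have := (proj2 hq) x hx; rewrite leNgt hlt'.
apply/setP => j; rewrite [j \in active A b y]inE.
case: (boolP (j \in Ss)) => hj; first by rewrite (hAi j hj) eqxx.
by rewrite (lt_eqF (hA j hj)).
Qed.

Definition valS (S : {set 'I_m}) (r : R) := exists zt lam yt,
  kkt_sys H f A b S zt lam /\ qp_sol H f A b rho zt yt /\ r = norm2 (yt - zt).

Lemma valS_fun S r1 r2 : valS S r1 -> valS S r2 -> r1 = r2.
Proof.
move=> [z1 [l1 [y1 [k1 [q1 ->]]]]] [z2 [l2 [y2 [k2 [q2 ->]]]]].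
have [ez _] := kkt_hom k1 k2; subst z2.
by rewrite (qp_unique q1 q2).
Qed.

Definition Phi (d : option R) : nat :=
  #|[set S : {set 'I_m} | boolp.asbool (exists r, valS S r /\ lt_delta d r)]|.

Lemma Phi_dec d r S : valS S r -> lt_delta d r -> (Phi (Some r) < Phi d)%N.
Proof.
move=> hv hl; apply: proper_card; apply/properP; split.
  apply/subsetP => S'; rewrite !inE => /boolp.asboolP [r' [hv' hl']].
  apply/boolp.asboolP; exists r'; split => //.
  by case: d hl => //= d0 h; apply: lt_trans h.
exists S; rewrite inE.
  by apply/boolp.asboolP; exists r.
apply/negP => /boolp.asboolP [r' [hv' /= hl']].
by move: hl'; rewrite (valS_fun hv' hv) ltxx.
Qed.

Lemma step_info (s s' : state R n m) : dr_step H f A b rho s (Cont s') ->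
  exists y, qp_sol H f A b rho (st_z s) y /\
  (st_prev s = Some (active A b y) -> exists zt lam,
     kkt_sys H f A b (active A b y) zt lam /\
     ~ ((forall i, i \in active A b y -> 0 <= lam i 0) /\ feasible A b zt)) /\
  (st_prev s <> Some (active A b y) -> st_prev s' = Some (active A b y)) /\
  ((st_z s' = znext H rho y (st_z s) /\ st_delta s' = st_delta s) \/
   (exists S r, valS S r /\ lt_delta (st_delta s) r /\ st_delta s' = Some r)).
Proof.
move=> [y [hq hif]]; exists y; split => //.
case: eqP hif => [E|NE] hif.
  have [zt [lam [hk hor]]] := hif.
  case: hor => [[_ [_ //]]|[hnc [yt [hyt hd]]]].
  split; first by move=> _; exists zt, lam.
  split; first by [].
  move: hd; case: ifP => hlt [->] /=.
    by right; exists (active A b y), (norm2 (yt - zt)); split => //; exists zt, lam, yt.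
  by left.
case: hif => -> /=.
split; first by move/NE.
by split => //; left.
Qed.

Lemma eventually_small (v : nat -> R) (P : nat -> R -> Prop) K0 eps :
  0 < eps -> (forall k, 0 <= v k) ->
  (forall k, (K0 <= k)%N -> exists c, P k c) ->
  (forall k c, (K0 <= k)%N -> P k c -> 0 <= c /\ v k.+1 + c <= v k) ->
  exists K1, (K0 <= K1)%N /\ forall k c, (K1 <= k)%N -> P k c -> c < eps.
Proof.
move=> heps hv hex hdec.
apply: Classical_Prop.NNPP => hn.
have hn' : forall K1, (K0 <= K1)%N -> exists k c, (K1 <= k)%N /\ P k c /\ eps <= c.
  move=> K1 hK1; apply: Classical_Prop.NNPP => h; apply: hn; exists K1; split => //.
  move=> k c hk hP; rewrite ltNge; apply/negP => hc; apply: h; by exists k, c.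
have mono : forall k j, (K0 <= k)%N -> v (k + j)%N <= v k.
  move=> k j hk; elim: j => [|j IH]; first by rewrite addn0.
  have [c hc] := hex (k + j)%N (leq_trans hk (leq_addr _ _)).
  have [hc0 hc1] := hdec _ _ (leq_trans hk (leq_addr _ _)) hc.
  rewrite addnS; lra.
have claim : forall j : nat, exists k, (K0 <= k)%N /\ v k + j%:R * eps <= v K0.
  elim=> [|j [k [hk hkv]]]; first by exists K0; rewrite mul0r addr0.
  have [k' [c [hk' [hP hc]]]] := hn' k hk.
  have hK0k' : (K0 <= k')%N := leq_trans hk hk'.
  have [hc0 hc1] := hdec _ _ hK0k' hP.
  exists k'.+1; split; first by apply: leqW.
  have := mono k (k' - k)%N hk; rewrite subnKC // => hm.
  rewrite -natr1 mulrDl mul1r; lra.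
have hb := archi_boundP (divr_ge0 (hv K0) (ltW heps)).
have [k [_ hk]] := claim (Num.Def.archi_bound (v K0 / eps)).
have : v K0 < (Num.Def.archi_bound (v K0 / eps))%:R * eps.
  by rewrite -ltr_pdivrMr.
have := hv k; lra.
Qed.

Lemma no_infinite (st : nat -> state R n m) :
  ~ (forall k, dr_step H f A b rho (st k) (Cont (st k.+1))).
Proof.
move=> hrun.
have hinfo k := step_info (hrun k).
pose g k := Phi (st_delta (st k)).
have hg k : (g k.+1 <= g k)%N.
  have [y [_ [_ [_ hC]]]] := hinfo k; rewrite /g.
  case: hC => [[_ ->] //|[S [r [hv [hl ->]]]]].
  by apply: ltnW; apply: Phi_dec hv hl.
have [K0 hK0] := nat_eventually_const hg.
have htail : forall k, (K0 <= k)%N -> forall y, qp_sol H f A b rho (st_z (st k)) y ->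
    st_z (st k.+1) = znext H rho y (st_z (st k)).
  move=> k hk y hy.
  have [y' [hy' [_ [_ hC]]]] := hinfo k.
  have ey := qp_unique hy' hy; subst y'.
  case: hC => [[-> _] //|[S [r [hv [hl hd]]]]].
  have := Phi_dec hv hl; rewrite -hd -/(g k) -/(g k.+1).
  by rewrite (hK0 k hk) (hK0 k.+1 (leqW hk)) ltnn.
pose vV k := V (st_z (st k) - xs).
pose P k c := exists y, qp_sol H f A b rho (st_z (st k)) y /\
   c = q (y - xs) + q (2 *: (st_z (st k.+1) - xs) - (st_z (st k) - xs)).
have [eps [heps hid]] := active_ident.
have [K1 [hK01 hK1]] : exists K1, (K0 <= K1)%N /\
    forall k c, (K1 <= k)%N -> P k c -> c < eps.
  apply: (eventually_small (v := vV)) => //.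
  - by move=> k; apply: V_ge0.
  - move=> k hk; have [y [hy _]] := hinfo k.
    by exists (q (y - xs) + q (2 *: (st_z (st k.+1) - xs) - (st_z (st k) - xs))), y.
  - move=> k c hk [y [hy ->]]; split; first by rewrite addr_ge0 ?q_ge0.
    have [hi hii] := step_conds hy.
    rewrite -(htail k hk y hy) in hii.
    have := lyap_step hi hii; rewrite /vV; lra.
have hact : forall k, (K1 <= k)%N -> forall y, qp_sol H f A b rho (st_z (st k)) y ->
    active A b y = Ss.
  move=> k hk y hy.
  have hK0k : (K0 <= k)%N := leq_trans hK01 hk.
  have := hK1 k _ hk (ex_intro _ y (conj hy erefl)).
  rewrite (htail k hK0k y hy) => hlt.
  have hq1 := q_ge0 (y - xs).
  have hq2 := q_ge0 (2 *: (znext H rho y (st_z (st k)) - xs) - (st_z (st k) - xs)).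
  apply: (hid (st_z (st k)) y hy); lra.
have hnostop : forall k, (K1 <= k)%N -> st_prev (st k) <> Some Ss.
  move=> k hk hp.
  have [y [hy [hA _]]] := hinfo k.
  have ea := hact k hk y hy.
  move: hA; rewrite ea => /(_ hp) [zt [lam [hk' hnc]]].
  have [ez el] := kkt_star hk'; subst zt lam.
  by apply: hnc; split => // i _; apply: hls.
have [y [hy [_ [hB _]]]] := hinfo K1.
case: (Classical_Prop.classic (st_prev (st K1) = Some (active A b y))) => hp.
  by apply: (hnostop K1 (leqnn _)); rewrite hp (hact K1 (leqnn _) y hy).
apply: (hnostop K1.+1 (leqnSn _)).
by rewrite (hB hp) (hact K1 (leqnn _) y hy).
Qed.

End Main.

Theorem theorem2 (R : realType) (n m : nat)
  (H : 'M[R]_n) (f : 'cV[R]_n) (A : 'M[R]_(m, n)) (b : 'cV[R]_m) (rho : R)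
  (z0 : 'cV[R]_n) (xstar : 'cV[R]_n) (lamstar : 'cV[R]_m) :
  0 < rho ->
  (exists x, feasible A b x) ->
  (forall v : 'cV[R]_n, v != 0 -> 0 < (v^T *m (H + H^T) *m v) 0 0) ->
  (* xstar solves the affine variational inequality *)
  feasible A b xstar ->
  (forall y, feasible A b y -> 0 <= ((H *m xstar + f)^T *m (y - xstar)) 0 0) ->
  (* LICQ *)
  row_free (subrows A (active A b xstar)) ->
  (* lamstar : KKT multiplier *)
  H *m xstar + f + A^T *m lamstar = 0 ->
  (forall i, 0 <= lamstar i 0) ->
  (lamstar^T *m (b - A *m xstar)) 0 0 = 0 ->
  (* strict complementarity *)
  (forall i, i \in active A b xstar -> 0 < lamstar i 0) ->
  (* every execution terminates after finitely many iterations ... *)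
  (forall st : nat -> state R n m, st 0%N = @init_state R n m z0 ->
     ~ (forall k, dr_step H f A b rho (st k) (Cont (st k.+1)))) /\
  (* ... and whenever it stops it returns (xstar, lamstar) *)
  (forall (st : nat -> state R n m) (K : nat) xr lr, st 0%N = @init_state R n m z0 ->
     (forall k, (k < K)%N -> dr_step H f A b rho (st k) (Cont (st k.+1))) ->
     dr_step H f A b rho (st K) (Stop xr lr) ->
     xr = xstar /\ lr = lamstar).
Proof.
move=> hrho _ hpd hxs hvi hlicq hkkt hls hcomp hsc; split.
  by move=> st _; apply: (no_infinite hrho hpd hxs hvi hlicq hkkt hls hcomp hsc).
move=> st K xr lr _ _ [y [hq hif]].
case: eqP hif => [_|_] hif; last by [].
have [zt [lam [hk [[hl [hf [-> ->]]]|[_ [yt [_ hd]]]]]]] := hif.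
  exact: (kkt_stop hpd hxs hvi hlicq hkkt hls hcomp hk hl hf).
by move: hd; case: ifP.
Qed.
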